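(* Let $r\in\mathcal R$ be a universal proper distance matrix and $(\mathcal U_r,\rho_r)$ the completion of $(\mathbb N,r)$. For any finite set $\{a_1,\dots,a_n\}\subset\mathcal U_r$ and any distance matrix $q$ of order $N>n$ whose upper-left $n\times n$ corner equals $\{\rho_r(a_i,a_j)\}_{i,j=1}^n$, there exist points $a_{n+1},\dots,a_N\in\mathcal U_r$ such that the distance matrix $\{\rho_r(a_i,a_j)\}_{i,j=1}^N$ equals $q$.
   Context: $\mathcal R$ is the set of infinite real matrices $r=\{r_{i,j}\}_{i,j\ge1}$ with $r_{i,i}=0$, $r_{i,j}\ge0$, $r_{i,j}=r_{j,i}$, $r_{i,k}+r_{k,j}\ge r_{i,j}$; a distance matrix of order $N$ is an $N\times N$ matrix with these properties; $r$ is proper if $r_{i,j}>0$ for $i\ne j$; $p_n(r)$ is the upper-left $n\times n$ corner. For an $n\times n$ distance matrix $q$, $A(q)=\{a\in\mathbb R^n:|a_i-a_j|\le q_{i,j}\le a_i+a_j\ \forall i,j\}$. A proper $r\in\mathcal R$ is universal if for every $n$, every $a\in A(p_n(r))$ and every $\epsilon>0$ there is $m\in\mathbb N$ with $\max_{1\le i\le n}|r_{i,m}-a_i|<\epsilon$. *)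

(* Defs.v *)
(* concrete real numbers R. Indices are 0-based:
   paper index k (1-based) corresponds to k-1 here. *)
From Stdlib Require Import Reals.
Open Scope R_scope.

Definition is_dist_matrix (N : nat) (q : nat -> nat -> R) : Prop :=
  forall i j k, (i < N)%nat -> (j < N)%nat -> (k < N)%nat ->
    q i i = 0 /\ 0 <= q i j /\ q i j = q j i /\ q i k + q k j >= q i j.

Definition in_calR (r : nat -> nat -> R) : Prop :=
  forall i j k,
    r i i = 0 /\ 0 <= r i j /\ r i j = r j i /\ r i k + r k j >= r i j.

Definition proper (r : nat -> nat -> R) : Prop :=
  forall i j, i <> j -> r i j > 0.

Definition in_A (n : nat) (q : nat -> nat -> R) (a : nat -> R) : Prop :=
  forall i j, (i < n)%nat -> (j < n)%nat ->
    Rabs (a i - a j) <= q i j /\ q i j <= a i + a j.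

(* p_n(r) is the upper-left n x n corner, i.e. r restricted to indices < n *)
Definition universal (r : nat -> nat -> R) : Prop :=
  in_calR r /\ proper r /\
  forall (n : nat) (a : nat -> R), in_A n r a ->
    forall eps, eps > 0 -> exists m : nat,
      forall i, (i < n)%nat -> Rabs (r i m - a i) < eps.

Definition is_metric {U : Type} (rho : U -> U -> R) : Prop :=
  (forall x y, 0 <= rho x y) /\
  (forall x y, rho x y = 0 <-> x = y) /\
  (forall x y, rho x y = rho y x) /\
  (forall x y z, rho x z <= rho x y + rho y z).

Definition is_complete {U : Type} (rho : U -> U -> R) : Prop :=
  forall u : nat -> U,
    (forall eps, eps > 0 -> exists M, forall m k, (m >= M)%nat -> (k >= M)%nat ->
       rho (u m) (u k) < eps) ->
    exists l, forall eps, eps > 0 -> exists M, forall m, (m >= M)%nat ->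
       rho (u m) l < eps.

Definition is_completion (r : nat -> nat -> R) (U : Type) (rho : U -> U -> R)
    (iota : nat -> U) : Prop :=
  is_metric rho /\ is_complete rho /\
  (forall i j, rho (iota i) (iota j) = r i j) /\
  (forall x eps, eps > 0 -> exists m, rho x (iota m) < eps).

(* Main.v *)
Require Import Defs.
From Stdlib Require Import Reals Lra Lia ClassicalEpsilon.
Open Scope R_scope.

Ltac splitabs := repeat match goal with
 | |- context [Rabs ?a] => let H := fresh in destruct (Rcase_abs a) as [H|H];
     [rewrite (Rabs_left a H) | rewrite (Rabs_right a H)]
 | H0 : context [Rabs ?a] |- _ => let H := fresh in destruct (Rcase_abs a) as [H|H];
     [rewrite (Rabs_left a H) in H0 | rewrite (Rabs_right a H) in H0]
end.

Fixpoint mnl (g : nat -> R) (K : nat) : R :=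
  match K with O => g O | S K' => Rmin (mnl g K') (g (S K')) end.

Lemma mnl_le g K i : (i <= K)%nat -> mnl g K <= g i.
Proof.
  induction K as [|K IH]; intros Hi; simpl.
  - replace i with O by lia. lra.
  - destruct (Nat.eq_dec i (S K)) as [->|Hne].
    + apply Rmin_r.
    + eapply Rle_trans; [apply Rmin_l|]. apply IH; lia.
Qed.

Lemma mnl_ex g K : exists i, (i <= K)%nat /\ mnl g K = g i.
Proof.
  induction K as [|K [i [Hi Heq]]]; simpl.
  - exists O; split; auto.
  - apply Rmin_case.
    + exists i; split; auto.
    + exists (S K); split; auto.
Qed.

Definition ext {U} (rho : U -> U -> R) (P : nat -> U) (v : nat -> R) K (x : U) :=
  mnl (fun i => v i + rho (P i) x) K.

Definition katG {U} (rho : U -> U -> R) (h : U -> R) :=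
  forall x y, Rabs (h x - h y) <= rho x y /\ rho x y <= h x + h y.

Lemma ext_kat {U} (rho : U -> U -> R) P v K :
  is_metric rho ->
  (forall i j, (i <= K)%nat -> (j <= K)%nat ->
     Rabs (v i - v j) <= rho (P i) (P j) /\ rho (P i) (P j) <= v i + v j) ->
  katG rho (ext rho P v K) /\ forall i, (i <= K)%nat -> ext rho P v K (P i) = v i.
Proof.
  intros [Hpos [Hz [Hs Ht]]] Hk. split.
  - intros x y. unfold ext.
    destruct (mnl_ex (fun i => v i + rho (P i) x) K) as [i [Hi Ei]].
    destruct (mnl_ex (fun i => v i + rho (P i) y) K) as [j [Hj Ej]].
    pose proof (mnl_le (fun i => v i + rho (P i) x) K j Hj) as L1.
    pose proof (mnl_le (fun i => v i + rho (P i) y) K i Hi) as L2.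
    simpl in *. rewrite Ei, Ej in *.
    pose proof (Ht (P i) x y). pose proof (Ht (P j) y x).
    pose proof (Hs x y).
    pose proof (Ht x (P i) y). pose proof (Ht (P i) (P j) y).
    pose proof (Hs x (P i)). destruct (Hk i j Hi Hj).
    split; [splitabs|]; lra.
  - intros i Hi. unfold ext.
    destruct (mnl_ex (fun i => v i + rho (P i) (P i)) K) as [j [Hj Ej]].
    pose proof (mnl_le (fun j => v j + rho (P j) (P i)) K i Hi) as L.
    destruct (mnl_ex (fun j => v j + rho (P j) (P i)) K) as [j' [Hj' Ej']].
    simpl in *. rewrite Ej' in *.
    assert (rho (P i) (P i) = 0) by (apply Hz; auto).
    destruct (Hk j' i Hj' Hi). splitabs; lra.
Qed.

Lemma dens_fin {U} (rho : U -> U -> R) (iota : nat -> U) :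
  (forall x eps, eps > 0 -> exists m, rho x (iota m) < eps) ->
  forall (P : nat -> U) K eta, eta > 0 ->
  exists M, forall i, (i <= K)%nat -> exists l, (l < M)%nat /\ rho (P i) (iota l) < eta.
Proof.
  intros Hd P K eta He. induction K as [|K [M HM]].
  - destruct (Hd (P O) eta He) as [m Hm]. exists (S m). intros i Hi.
    replace i with O by lia. exists m; split; auto.
  - destruct (Hd (P (S K)) eta He) as [m Hm]. exists (Nat.max M (S m)).
    intros i Hi. destruct (Nat.eq_dec i (S K)) as [->|Hne].
    + exists m; split; [lia|auto].
    + destruct (HM i ltac:(lia)) as [l [Hl Hl']]. exists l; split; [lia|auto].
Qed.

Lemma approx r U (rho : U -> U -> R) iota h :
  universal r -> is_completion r U rho iota -> katG rho h ->
  forall P K eps, eps > 0 -> exists m, forall i, (i <= K)%nat ->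
    Rabs (rho (iota m) (P i) - h (P i)) < eps.
Proof.
  intros [_ [_ Hu]] [[Hpos [Hz [Hs Ht]]] [_ [Hr Hd]]] Hh P K eps He.
  destruct (dens_fin rho iota Hd P K (eps/3) ltac:(lra)) as [M HM].
  destruct (Hu M (fun l => h (iota l))) with (eps := eps/3) as [m Hm]; [|lra|].
  - intros i j _ _. rewrite <- Hr. apply Hh.
  - exists m. intros i Hi. destruct (HM i Hi) as [l [Hl Hl']].
    specialize (Hm l Hl). simpl in Hm. rewrite <- Hr in Hm.
    pose proof (Ht (iota m) (iota l) (P i)). pose proof (Ht (iota m) (P i) (iota l)).
    pose proof (Hs (iota l) (P i)). pose proof (Hs (iota l) (iota m)).
    destruct (Hh (iota l) (P i)). splitabs; lra.
Qed.

Lemma zero_of_small a : (forall e, e > 0 -> Rabs a < e) -> a = 0.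
Proof.
  intros H. destruct (Req_dec a 0) as [|Hn]; auto.
  pose proof (Rabs_pos_lt a Hn). specialize (H _ H0). lra.
Qed.

Lemma step_lemma r U (rho : U -> U -> R) iota (x : nat -> U) (f : nat -> R) K :
  universal r -> is_completion r U rho iota ->
  (forall i j, (i <= K)%nat -> (j <= K)%nat ->
     Rabs (f i - f j) <= rho (x i) (x j) /\ rho (x i) (x j) <= f i + f j) ->
  forall t z, (forall i, (i <= K)%nat -> Rabs (rho z (x i) - f i) < (/2)^t) ->
  exists z', (forall i, (i <= K)%nat -> Rabs (rho z' (x i) - f i) < (/2)^(S t))
     /\ rho z z' < 2 * (/2)^t.
Proof.
  intros Hu Hc Hk t z Hg.
  pose proof Hc as [Hm _]. pose proof Hm as [Hpos [Hz [Hs Ht]]].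
  assert (Hf0 : forall i, (i <= K)%nat -> 0 <= f i).
  { intros i Hi. destruct (Hk i i Hi Hi). assert (rho (x i) (x i) = 0) by (apply Hz; auto). lra. }
  set (h0 := ext rho x f K).
  assert (Hp : 0 < (/2)^t) by (apply pow_lt; lra).
  set (d := Rmin ((/2)^t) (h0 z)).
  assert (Hd : forall i, (i <= K)%nat ->
     Rabs (f i - d) <= rho (x i) z /\ rho (x i) z <= f i + d).
  { intros i Hi. unfold d, h0, ext.
    pose proof (mnl_le (fun i => f i + rho (x i) z) K i Hi) as L.
    destruct (mnl_ex (fun i => f i + rho (x i) z) K) as [j [Hj Ej]].
    simpl in *. rewrite Ej in *. specialize (Hg i Hi).
    destruct (Hk i j Hi Hj). pose proof (Ht (x i) (x j) z). pose proof (Ht (x j) (x i) z).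
    pose proof (Hs z (x i)). pose proof (Hs (x j) (x i)).
    pose proof (Ht (x i) z (x j)). pose proof (Hs z (x j)).
    assert (d1 : Rmin ((/2)^t) (f j + rho (x j) z) <= (/2)^t) by apply Rmin_l.
    assert (d2 : Rmin ((/2)^t) (f j + rho (x j) z) <= f j + rho (x j) z) by apply Rmin_r.
    revert d1 d2. apply Rmin_case; intros; splitabs; lra. }
  assert (Hd0 : 0 <= d).
  { unfold d, h0, ext. apply Rmin_case; [lra|].
    destruct (mnl_ex (fun i => f i + rho (x i) z) K) as [j [Hj Ej]].
    simpl in *. rewrite Ej. pose proof (Hpos (x j) z). pose proof (Hf0 j Hj). lra. }
  set (P := fun i => if (i <=? K)%nat then x i else z).
  set (v := fun i => if (i <=? K)%nat then f i else d).
  destruct (ext_kat rho P v (S K) Hm) as [Hk1 He1].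
  { intros i j Hi Hj. unfold P, v.
    destruct (Nat.leb_spec i K); destruct (Nat.leb_spec j K).
    - apply Hk; lia.
    - destruct (Hd i ltac:(lia)); split; auto.
    - rewrite <- Rabs_Ropp. replace (- (d - f j)) with (f j - d) by ring.
      rewrite (Hs z). destruct (Hd j ltac:(lia)); split; lra.
    - assert (rho z z = 0) by (apply Hz; auto). replace (d - d) with 0 by ring.
      rewrite Rabs_R0. lra. }
  destruct (approx r U rho iota _ Hu Hc Hk1 P (S K) ((/2)^(S t))) as [m Hm1].
  { apply pow_lt; lra. }
  exists (iota m). split.
  - intros i Hi. specialize (Hm1 i ltac:(lia)). rewrite He1 in Hm1 by lia.
    unfold P, v in Hm1. destruct (Nat.leb_spec i K); [|lia]. auto.
  - specialize (Hm1 (S K) ltac:(lia)). rewrite He1 in Hm1 by lia.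
    unfold P, v in Hm1. destruct (Nat.leb_spec (S K) K); [lia|].
    assert (d <= (/2)^t) by apply Rmin_l.
    rewrite Hs. simpl in Hm1. splitabs; lra.
Qed.

Fixpoint zseq {A} (inh : inhabited A) (G0 : A -> Prop) (St : nat -> A -> A -> Prop) (t : nat) : A :=
  match t with
  | O => epsilon inh G0
  | S t' => epsilon inh (St t' (zseq inh G0 St t'))
  end.

Lemma onepoint r U (rho : U -> U -> R) iota :
  universal r -> is_completion r U rho iota ->
  forall k (x : nat -> U) (f : nat -> R),
  (forall i j, (i < k)%nat -> (j < k)%nat ->
     Rabs (f i - f j) <= rho (x i) (x j) /\ rho (x i) (x j) <= f i + f j) ->
  exists z, forall i, (i < k)%nat -> rho z (x i) = f i.
Proof.
  intros Hu Hc k x f Hk.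
  destruct k as [|K]. { exists (iota O). intros; lia. }
  assert (Hk' : forall i j, (i <= K)%nat -> (j <= K)%nat ->
     Rabs (f i - f j) <= rho (x i) (x j) /\ rho (x i) (x j) <= f i + f j).
  { intros; apply Hk; lia. }
  pose proof Hc as [Hm [Hcomp _]]. pose proof Hm as [Hpos [Hz [Hs Ht]]].
  set (good := fun t z => forall i, (i <= K)%nat -> Rabs (rho z (x i) - f i) < (/2)^t).
  set (St := fun t z z' => good (S t) z' /\ rho z z' < 2 * (/2)^t).
  set (zs := zseq (inhabits (iota O)) (good O) St).
  assert (Hgood : forall t, good t (zs t)).
  { induction t as [|t IH].
    - change (good O (epsilon (inhabits (iota O)) (good O))). apply epsilon_spec.
      destruct (ext_kat rho x f K Hm Hk') as [Hk1 He1].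
      destruct (approx r U rho iota _ Hu Hc Hk1 x K 1 ltac:(lra)) as [m Hm1].
      exists (iota m). intros i Hi. specialize (Hm1 i Hi). rewrite He1 in Hm1 by auto.
      simpl. exact Hm1.
    - assert (St t (zs t) (zs (S t))).
      { change (St t (zs t) (epsilon (inhabits (iota O)) (St t (zs t)))). apply epsilon_spec. apply (step_lemma r U rho iota x f K Hu Hc Hk' t (zs t) IH). }
      apply H. }
  assert (Hstep : forall t, rho (zs t) (zs (S t)) < 2 * (/2)^t).
  { intros t. assert (St t (zs t) (zs (S t))).
    { change (St t (zs t) (epsilon (inhabits (iota O)) (St t (zs t)))). apply epsilon_spec. apply (step_lemma r U rho iota x f K Hu Hc Hk' t (zs t) (Hgood t)). }
    apply H. }
  assert (Hcs : forall t j, rho (zs t) (zs (t + j)%nat) <= 4 * ((/2)^t - (/2)^(t+j))).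
  { intros t j. induction j as [|j IH].
    - rewrite Nat.add_0_r. assert (rho (zs t) (zs t) = 0) by (apply Hz; auto). lra.
    - rewrite Nat.add_succ_r. pose proof (Hstep (t + j)%nat).
      pose proof (Ht (zs t) (zs (t+j)%nat) (zs (S (t+j)))). simpl. lra. }
  assert (Hcs2 : forall t m, (t <= m)%nat -> rho (zs t) (zs m) <= 4 * (/2)^t).
  { intros t m Htm. replace m with (t + (m - t))%nat by lia.
    pose proof (Hcs t (m - t)%nat). pose proof (pow_lt (/2) (t + (m-t))) as P. lra. }
  assert (Hsmall : forall e, e > 0 -> exists M, forall n, (n >= M)%nat -> (/2)^n < e).
  { intros e He. destruct (pow_lt_1_zero (/2)) with (y := e) as [M HM]; auto.
    - rewrite Rabs_right; lra.
    - exists M. intros n Hn. specialize (HM n Hn). rewrite Rabs_right in HM; auto.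
      apply Rle_ge, pow_le; lra. }
  destruct (Hcomp zs) as [l Hl].
  { intros e He. destruct (Hsmall (e/8) ltac:(lra)) as [M HM]. exists M.
    intros m k Hm1 Hk1. pose proof (Hcs2 M m Hm1). pose proof (Hcs2 M k Hk1).
    pose proof (HM M (le_n _)). pose proof (Ht (zs m) (zs M) (zs k)).
    pose proof (Hs (zs m) (zs M)). lra. }
  exists l. intros i Hi. apply Rminus_diag_uniq. apply zero_of_small. intros e He.
  destruct (Hl (e/2) ltac:(lra)) as [M1 HM1].
  destruct (Hsmall (e/2) ltac:(lra)) as [M2 HM2].
  set (m := Nat.max M1 M2).
  specialize (HM1 m ltac:(lia)). specialize (HM2 m ltac:(lia)).
  specialize (Hgood m i ltac:(lia)). unfold good in Hgood.
  pose proof (Ht l (zs m) (x i)). pose proof (Ht (zs m) l (x i)).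
  pose proof (Hs l (zs m)). splitabs; lra.
Qed.

Theorem corollary4 (r : nat -> nat -> R) (U : Type) (rho : U -> U -> R)
    (iota : nat -> U) :
  universal r -> is_completion r U rho iota ->
  forall (n N : nat) (a : nat -> U) (q : nat -> nat -> R),
    (forall i j, (i < n)%nat -> (j < n)%nat -> i <> j -> a i <> a j) ->
    (n < N)%nat ->
    is_dist_matrix N q ->
    (forall i j, (i < n)%nat -> (j < n)%nat -> q i j = rho (a i) (a j)) ->
    exists b : nat -> U,
      (forall i, (i < n)%nat -> b i = a i) /\
      (forall i j, (i < N)%nat -> (j < N)%nat -> rho (b i) (b j) = q i j).
Proof.
  intros Hu Hc n N a q _ HnN Hq Hcor.
  pose proof Hc as [[Hpos [Hz [Hs Ht]]] _].
  assert (Main : forall d, (n + d <= N)%nat -> exists b : nat -> U,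
      (forall i, (i < n)%nat -> b i = a i) /\
      (forall i j, (i < n + d)%nat -> (j < n + d)%nat -> rho (b i) (b j) = q i j)).
  { induction d as [|d IH]; intros Hd.
    - exists a. split; auto. intros i j Hi Hj. rewrite Hcor by lia. reflexivity.
    - destruct (IH ltac:(lia)) as [b [Hb1 Hb2]].
      set (j0 := (n + d)%nat).
      destruct (onepoint r U rho iota Hu Hc j0 b (fun i => q j0 i)) as [z Hzz].
      { intros i j Hi Hj. rewrite Hb2 by lia. simpl.
        destruct (Hq j0 i j ltac:(lia) ltac:(lia) ltac:(lia)) as [_ [_ [_ T1]]].
        destruct (Hq j0 j i ltac:(lia) ltac:(lia) ltac:(lia)) as [_ [_ [_ T2]]].
        destruct (Hq i j0 j ltac:(lia) ltac:(lia) ltac:(lia)) as [_ [_ [S1 T3]]].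
        destruct (Hq j j0 i ltac:(lia) ltac:(lia) ltac:(lia)) as [_ [_ [S2 T4]]].
        destruct (Hq j i j0 ltac:(lia) ltac:(lia) ltac:(lia)) as [_ [_ [S3 _]]].
        destruct (Hq i j j0 ltac:(lia) ltac:(lia) ltac:(lia)) as [_ [_ [_ T5]]].
        splitabs; lra. }
      exists (fun i => if Nat.eq_dec i j0 then z else b i). split.
      + intros i Hi. destruct (Nat.eq_dec i j0); [unfold j0 in *; lia|auto].
      + intros i j Hi Hj.
        destruct (Nat.eq_dec i j0) as [->|Hi0]; destruct (Nat.eq_dec j j0) as [->|Hj0].
        * assert (rho z z = 0) by (apply Hz; auto).
          destruct (Hq j0 j0 j0 ltac:(lia) ltac:(lia) ltac:(lia)) as [E _]. lra.
        * apply Hzz. unfold j0 in *; lia.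
        * rewrite Hs, Hzz by (unfold j0 in *; lia).
          destruct (Hq i j0 i ltac:(lia) ltac:(lia) ltac:(lia)) as [_ [_ [E _]]]. auto.
        * apply Hb2; unfold j0 in *; lia. }
  destruct (Main (N - n)%nat ltac:(lia)) as [b [Hb1 Hb2]].
  exists b. split; auto. intros i j Hi Hj. apply Hb2; lia.
Qed.
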